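(* Consider the Byzantine-resilient state estimation algorithm described in the context, run on a complete communication graph on $n$ agents with trimming parameter $b$, where $n>2b$, and let ${\mathcal{A}}$ be the set of Byzantine agents with $|{\mathcal{A}}|\le b$ and $\phi=|{\mathcal{V}}\setminus{\mathcal{A}}|$. Then for each iteration $t\ge 1$, each good agent $i\in{\mathcal{V}}\setminus{\mathcal{A}}$ and each coordinate $k\in\{1,\dots,d\}$, there exist coefficients $(\beta_{ij}^k(t))_{j\in{\mathcal{V}}\setminus{\mathcal{A}}}$ such that (i) $x_i^k(t)=\sum_{j\in{\mathcal{V}}\setminus{\mathcal{A}}}\beta_{ij}^k(t)\,\langle z_j(t),e_k\rangle$; and (ii) $0\le \beta_{ij}^k(t)\le \frac{1}{\phi-b}$ for all $j\in{\mathcal{V}}\setminus{\mathcal{A}}$, and $\sum_{j\in{\mathcal{V}}\setminus{\mathcal{A}}}\beta_{ij}^k(t)=1$.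
   Context: Agents ${\mathcal{V}}=\{1,\dots,n\}$ communicate over a directed graph $G=({\mathcal{V}},{\mathcal{E}})$; ${\mathcal{N}}_i$ denotes the set of incoming neighbors of $i$ (here $G$ is complete, so ${\mathcal{N}}_i\cup\{i\}={\mathcal{V}}$). There is an unknown vector $\theta^*\in\mathbb{R}^d$. Agent $i$ has a matrix $H_i\in\mathbb{R}^{n_i\times d}$ and at each time $t=1,2,\dots$ obtains $y_i(t)=H_i\theta^*+w_i(t)$. An unknown set ${\mathcal{A}}\subseteq{\mathcal{V}}$ of Byzantine agents with $|{\mathcal{A}}|\le b$ is chosen by an adversary; $b$ is known to all agents. Byzantine agents may send arbitrary vectors, possibly different vectors to different recipients. $e_k$ is the $k$-th standard basis vector of $\mathbb{R}^d$. Algorithm (run by each good agent $i\in{\mathcal{V}}\setminus{\mathcal{A}}$): $x_i(0)\in\mathbb{R}^d$ is arbitrary. At iteration $t\ge1$: compute $z_i(t)=x_i(t-1)-H_i^\top\big(H_i x_i(t-1)-\frac1t\sum_{r=1}^t y_i(r)\big)$; send $z_i(t)$ to all out-neighbors; agent $i$ receives $m_{ji}(t)\in\mathbb{R}^d$ from each $j\in{\mathcal{N}}_i$, where $m_{ji}(t)=z_j(t)$ if $j\notin{\mathcal{A}}$ and $m_{ji}(t)$ is arbitrary if $j\in{\mathcal{A}}$, and sets $m_{ii}(t)=z_i(t)$. For each $k=1,\dots,d$: sort the values $\langle m_{ji}(t),e_k\rangle$, $j\in{\mathcal{N}}_i\cup\{i\}$, in non-decreasing order, remove the $b$ largest and the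 $b$ smallest values, let ${\mathcal{R}}_i^k(t)$ be the set of indices of the remaining values, and set $x_i^k(t)=\frac{1}{|{\mathcal{R}}_i^k(t)|}\sum_{j\in{\mathcal{R}}_i^k(t)}\langle m_{ji}(t),e_k\rangle$. Then $x_i(t)=(x_i^1(t),\dots,x_i^d(t))^\top$. *)

(* Defs.v *)
From HB Require Import structures.
From mathcomp Require Import all_boot all_order all_algebra.
Set Implicit Arguments. Unset Strict Implicit. Unset Printing Implicit Defensive.
Import Order.TTheory GRing.Theory Num.Theory.
Local Open Scope ring_scope.

Definition trimmed_mean (R : realFieldType) (b : nat) (s : seq R) : R :=
  let s' := drop b (take (size s - b)%N (sort (fun x y : R => x <= y) s)) in
  (\sum_(v <- s') v) / (size s')%:R.

Section Algo.
Variables (R : realFieldType) (n d : nat) (ni : 'I_n -> nat)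
  (H : forall i : 'I_n, 'M[R]_(ni i, d))
  (theta : 'cV[R]_d)
  (w : forall i : 'I_n, nat -> 'cV[R]_(ni i))
  (b : nat)
  (A : {set 'I_n})
  (adv : nat -> 'I_n -> 'I_n -> 'cV[R]_d)       (* adv t j i : message of j to i at t *)
  (x0 : 'I_n -> 'cV[R]_d).

Definition obs (i : 'I_n) (t : nat) : 'cV[R]_(ni i) := H i *m theta + w i t.

Definition zstep (xprev : 'I_n -> 'cV[R]_d) (t : nat) (i : 'I_n) : 'cV[R]_d :=
  xprev i - (H i)^T *m (H i *m xprev i - (t%:R)^-1 *: \sum_(1 <= r < t.+1) obs i r).

Definition msg (xprev : 'I_n -> 'cV[R]_d) (t : nat) (j i : 'I_n) : 'cV[R]_d :=
  if (j \in A) && (j != i) then adv t j i else zstep xprev t j.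

(* x(t) for all agents (values at Byzantine agents are irrelevant) *)
Fixpoint xstate (t : nat) : 'I_n -> 'cV[R]_d :=
  match t with
  | 0 => x0
  | t'.+1 => fun i =>
      \col_(k < d) trimmed_mean b [seq msg (xstate t') t'.+1 j i k 0 | j <- enum 'I_n]
  end.

(* z_j(t) for t >= 1 *)
Definition zstate (t : nat) (j : 'I_n) : 'cV[R]_d := zstep (xstate t.-1) t j.

End Algo.

(* Main.v *)
Require Import Defs.
From HB Require Import structures.
From mathcomp Require Import all_boot all_order all_algebra.
Import Order.TTheory GRing.Theory Num.Theory.
From mathcomp Require Import ring lra zify.
Local Open Scope ring_scope.

Lemma ar1 n b : (2 * b < n)%N -> (b <= n)%N. Proof. lia. Qed.
Lemma ar2 n b : (2 * b < n)%N -> (n - (n - b) = b)%N. Proof. lia. Qed.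

Lemma lowbnd (R : realFieldType) (I : finType) (K L S : {set I}) (f : I -> R) :
  S \subset L :|: K -> (#|K| <= #|S|)%N ->
  (forall x y, x \in L -> y \in K -> f x <= f y) ->
  #|K|%:R * \sum_(j in S) f j <= #|S|%:R * \sum_(j in K) f j.
Proof.
move=> sS hKS hle.
have [K0|[k0 k0K]] := set_0Vmem K.
  by rewrite K0 cards0 big_set0 mul0r mulr0.
case: (arg_minP f k0K) => k1 k1K k1min.
have cS := cardsID K S. have cK := cardsID S K.
rewrite setIC in cK.
rewrite [\sum_(j in K) _](big_setID S) [\sum_(j in S) _](big_setID K) /= [K :&: S]setIC.
move: hKS; rewrite -cS -cK.
set X := \sum_(j in S :&: K) f j. set Y := \sum_(j in K :\: S) f j.
set Z := \sum_(j in S :\: K) f j.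
have hX : #|S :&: K|%:R * f k1 <= X.
  rewrite mulr_natl -sumr_const; apply: ler_sum => j.
  by rewrite inE => /andP[_ /k1min].
have hY : #|K :\: S|%:R * f k1 <= Y.
  rewrite mulr_natl -sumr_const; apply: ler_sum => j.
  by rewrite inE => /andP[_ /k1min].
have hZ : Z <= #|S :\: K|%:R * f k1.
  rewrite mulr_natl -sumr_const; apply: ler_sum => j.
  rewrite inE => /andP[jK jS]; apply: hle => //.
  by move/subsetP: sS => /(_ j jS); rewrite inE (negbTE jK) orbF.
move: #|S :&: K| #|K :\: S| #|S :\: K| hX hY hZ => r m s hX hY hZ.
rewrite leq_add2l => hms.
have hms' : (m%:R <= s%:R :> R) by rewrite ler_nat.
have r0 : (0 <= r%:R :> R) by [].
have m0 : (0 <= m%:R :> R) by [].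
have h1 : 0 <= (s%:R - m%:R) * (X - r%:R * f k1) :> R.
  by apply: mulr_ge0; rewrite subr_ge0.
have h2 : 0 <= (r%:R + s%:R) * (Y - m%:R * f k1) :> R.
  by apply: mulr_ge0; rewrite ?subr_ge0 ?addr_ge0.
have h3 : 0 <= (r%:R + m%:R) * (s%:R * f k1 - Z) :> R.
  by apply: mulr_ge0; rewrite ?subr_ge0 ?addr_ge0.
rewrite !natrD.
nra.
Qed.

Lemma ar3 n b : (2 * b < n)%N -> (b + (n - 2 * b) = n - b)%N. Proof. lia. Qed.
Lemma ar4 x y z a : (x + y = z)%N -> (x <= a)%N -> (z - a <= y)%N. Proof. lia. Qed.
Lemma arith n b a c p1 p2 : (2 * b < n)%N -> (a <= b)%N -> c = (n - a)%N ->
  (n - b - a <= p1)%N -> (n - b - a <= p2)%N ->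
  [/\ (0 < n - 2 * b)%N, (n - 2 * b <= c - b)%N, (b <= c)%N,
      (c - b <= p1)%N & (c - b <= p2)%N].
Proof. move=> h1 h2 -> h4 h5; split; lia. Qed.

Lemma convex_pick (R : realFieldType) (lo mu hi : R) : lo <= mu -> mu <= hi ->
  exists lam, 0 <= lam <= 1 /\ lam * lo + (1 - lam) * hi = mu.
Proof.
move=> h1 h2; case: (eqVneq hi lo) => e.
  exists 1; rewrite lexx ler01; split => //.
  have -> : mu = lo by apply/le_anti; rewrite h1 -e h2.
  by rewrite subrr mul0r addr0 mul1r.
have hp : 0 < hi - lo.
  by rewrite subr_gt0 lt_neqAle eq_sym e (le_trans h1 h2).
exists ((hi - mu) / (hi - lo)); split.
  apply/andP; split; first by apply: divr_ge0; rewrite subr_ge0 // (le_trans h1 h2).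
  by rewrite ler_pdivrMr // mul1r lerD2l lerN2.
have hn : hi - lo != 0 by rewrite gt_eqF.
field; exact: hn.
Qed.

Lemma sum_sub (R : realFieldType) (I : finType) (A S : {set I}) (c : R) (F : I -> R) :
  S \subset ~: A ->
  \sum_(j | j \notin A) (if j \in S then c else 0) * F j = c * \sum_(j in S) F j.
Proof.
move=> sub; rewrite mulr_sumr.
rewrite (eq_bigr (fun j => if j \in S then c * F j else 0)); last first.
  by move=> j _; case: ifP => _; rewrite ?mul0r.
rewrite -big_mkcondr; apply: eq_bigl => j.
case: (boolP (j \in S)) => h; last by rewrite andbF.
by have := subsetP sub j h; rewrite inE => ->.
Qed.

Lemma sum_sub1 (R : realFieldType) (I : finType) (A S : {set I}) (c : R) :
  S \subset ~: A ->
  \sum_(j | j \notin A) (if j \in S then c else 0) = c * #|S|%:R.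
Proof.
move=> sub; have := @sum_sub R I A S c (fun _ => 1) sub.
rewrite sumr_const => <-; apply: eq_bigr => j _; by rewrite mulr1.
Qed.

Lemma key (R : realFieldType) (n b : nat) (A : {set 'I_n}) (f : 'I_n -> R) :
  (2 * b < n)%N -> (#|A| <= b)%N ->
  exists beta : 'I_n -> R,
    trimmed_mean b [seq f j | j <- enum 'I_n]
      = \sum_(j | j \notin A) beta j * f j
    /\ (forall j, j \notin A -> 0 <= beta j <= 1 / ((#|~: A|)%:R - b%:R))
    /\ \sum_(j | j \notin A) beta j = 1.
Proof.
move=> hn hA.
set le := (fun x y : R => x <= y).
set tau := sort (relpre f le) (enum 'I_n).
have tau_uniq : uniq tau by rewrite sort_uniq enum_uniq.
have tau_mem : forall j, j \in tau by move=> j; rewrite mem_sort mem_enum.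
have tau_size : size tau = n by rewrite size_sort size_enum_ord.
have tau_sorted : sorted (relpre f le) tau.
  apply: sort_sorted => x y; exact: le_total.
have tau_pw : pairwise (relpre f le) tau.
  rewrite -sorted_pairwise // => x y z; exact: le_trans.
set L := take b tau. set K := drop b (take (n - b) tau). set U := drop (n - b) tau.
have tauE : tau = L ++ K ++ U.
  rewrite catA /L /K -[X in take b X](cat_take_drop (n - b)).
  rewrite takel_cat; last by rewrite size_takel; lia.
  by rewrite cat_take_drop cat_take_drop.
have sK : size K = (n - 2 * b)%N.
  rewrite size_drop size_takel; lia.
have tmE : trimmed_mean b [seq f j | j <- enum 'I_n] = (\sum_(j <- K) f j) / (n - 2 * b)%:R.
  rewrite /trimmed_mean size_map size_enum_ord sort_map -/le -/tau.
  by rewrite -map_take -map_drop big_map size_map sK.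

have tau_u := tau_uniq; rewrite tauE cat_uniq cat_uniq has_cat negb_or in tau_u.
case/and5P: tau_u => uL /andP[hLK hLU] uK hKU uU.
have pw := tau_pw; rewrite tauE !pairwise_cat !allrel_catr in pw.
case/and3P: pw => /andP[rLK rLU] _ /and3P[rKU _ _].
have leLK : forall x y, x \in L -> y \in K -> f x <= f y.
  by move=> x y hx hy; exact: (allrelP rLK x y hx hy).
have leKU : forall x y, x \in K -> y \in U -> f x <= f y.
  by move=> x y hx hy; exact: (allrelP rKU x y hx hy).
have dLK : forall x, x \in L -> x \notin K.
  by move=> x hx; apply/negP => hk; move/hasPn: hLK => /(_ x hk); rewrite hx.
have dLU : forall x, x \in L -> x \notin U.
  by move=> x hx; apply/negP => hk; move/hasPn: hLU => /(_ x hk); rewrite hx.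
have dKU : forall x, x \in K -> x \notin U.
  by move=> x hx; apply/negP => hk; move/hasPn: hKU => /(_ x hk); rewrite hx.
have cover : forall x, [|| x \in L, x \in K | x \in U].
  by move=> x; have := tau_mem x; rewrite tauE !mem_cat.
have sL : size L = b by rewrite size_takel // tau_size; apply: ar1.
have sU : size U = b by rewrite size_drop tau_size; apply: ar2.

set KS := [set x | x \in K]. set LS := [set x | x \in L]. set US := [set x | x \in U].
have cKS : #|KS| = (n - 2 * b)%N by rewrite cardsE -sK; apply/card_uniqP.
have cLS : #|LS| = b by rewrite cardsE -sL; apply/card_uniqP.
have cUS : #|US| = b by rewrite cardsE -sU; apply/card_uniqP.
have cC : #|~: A| = (n - #|A|)%N.
  by have := cardsC A; rewrite card_ord; move: #|A| #|~: A| => x y <-; rewrite addKn.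

have LK0 : LS :&: KS = set0.
  apply/setP => x; rewrite !inE; apply/negP => /andP[hl hk].
  by move: (dLK x hl); rewrite hk.
have KU0 : KS :&: US = set0.
  apply/setP => x; rewrite !inE; apply/negP => /andP[hk hu].
  by move: (dKU x hk); rewrite hu.
have cLK : #|LS :|: KS| = (n - b)%N.
  by have := cardsUI LS KS; rewrite LK0 cards0 addn0 cLS cKS ar3.
have cKU : #|KS :|: US| = (n - b)%N.
  by have := cardsUI KS US; rewrite KU0 cards0 addn0 cUS cKS addnC ar3.
set Slo := (LS :|: KS) :\: A. set Shi := (KS :|: US) :\: A.
have hlo : (n - b - #|A| <= #|Slo|)%N.
  rewrite -cLK; apply: (ar4 _ _ _ _ (cardsID A (LS :|: KS))).
  by apply: subset_leq_card; apply: subsetIr.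
have hhi : (n - b - #|A| <= #|Shi|)%N.
  rewrite -cKU; apply: (ar4 _ _ _ _ (cardsID A (KS :|: US))).
  by apply: subset_leq_card; apply: subsetIr.
have [hm0 hmq hbq hqlo hqhi] := arith _ _ _ _ _ _ hn hA cC hlo hhi.
have hq0 := leq_trans hm0 hmq.
have lowK : #|KS|%:R * \sum_(j in Slo) f j <= #|Slo|%:R * \sum_(j in KS) f j.
  apply: lowbnd; first exact: subsetDl.
    by rewrite cKS (leq_trans hmq hqlo).
  move=> x y; rewrite !inE; exact: leLK.
have upK : #|KS|%:R * \sum_(j in Shi) (- f j) <= #|Shi|%:R * \sum_(j in KS) (- f j).
  apply: lowbnd; first by rewrite setUC; exact: subsetDl.
    by rewrite cKS (leq_trans hmq hqhi).
  move=> x y; rewrite !inE lerN2 => hx hy; exact: leKU.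
rewrite !sumrN !mulrN lerN2 in upK.
rewrite cKS in lowK upK.
have tmE' : trimmed_mean b [seq f j | j <- enum 'I_n] = (\sum_(j in KS) f j) / (n - 2 * b)%:R.
  rewrite tmE big_uniq //; congr (_ / _); apply: eq_bigl => j; by rewrite inE.
rewrite tmE'.
have pl0 : (0 < #|Slo|)%N by exact: leq_trans hq0 hqlo.
have ph0 : (0 < #|Shi|)%N by exact: leq_trans hq0 hqhi.
set SK := \sum_(j in KS) f j. set SL := \sum_(j in Slo) f j.
set SH := \sum_(j in Shi) f j.
set pl : R := #|Slo|%:R. set ph : R := #|Shi|%:R. set mR : R := (n - 2 * b)%:R.
have pl0' : 0 < pl by rewrite ltr0n.
have ph0' : 0 < ph by rewrite ltr0n.
have mR0' : 0 < mR by rewrite ltr0n.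
have lomu : SL / pl <= SK / mR.
  rewrite ler_pdivrMr // mulrAC ler_pdivlMr // [SL * _]mulrC [SK * _]mulrC; exact: lowK.
have muhi : SK / mR <= SH / ph.
  rewrite ler_pdivrMr // mulrAC ler_pdivlMr // [SK * _]mulrC [SH * _]mulrC; exact: upK.
have [lam [/andP[lam0 lam1] lamE]] := convex_pick _ _ _ _ lomu muhi.
exists (fun j => (if j \in Slo then lam / pl else 0) + (if j \in Shi then (1 - lam) / ph else 0)).
have sLo : Slo \subset ~: A by apply/subsetP => x; rewrite !inE => /andP[].
have sHi : Shi \subset ~: A by apply/subsetP => x; rewrite !inE => /andP[].
split.
  under eq_bigr do rewrite mulrDl.
  rewrite big_split /= !(sum_sub _ _ _ _ _ _) // -lamE /SL /SH; ring.
split.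
  move=> j jA; rewrite -natrB //.
  have q0 : 0 < (#|~: A| - b)%:R :> R by rewrite ltr0n.
  have hpl : pl^-1 <= (#|~: A| - b)%:R^-1 by rewrite lef_pV2 ?posrE ?ler_nat.
  have hph : ph^-1 <= (#|~: A| - b)%:R^-1 by rewrite lef_pV2 ?posrE ?ler_nat.
  apply/andP; split.
    by apply: addr_ge0; case: ifP => _ //; apply: divr_ge0 => //; rewrite subr_ge0.
  rewrite [X in _ <= X](_ : _ = lam / (#|~: A| - b)%:R + (1 - lam) / (#|~: A| - b)%:R);
    last by rewrite -mulrDl addrC subrK.
  apply: lerD; case: ifP => _.
  - by apply: ler_wpM2l.
  - by apply: divr_ge0 => //; apply: ltW.
  - by apply: ler_wpM2l; rewrite // subr_ge0.
  - by apply: divr_ge0; rewrite ?subr_ge0 // ltW.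
rewrite big_split /= !(sum_sub1 _ _ _ _ _) // !divfK ?gt_eqF //.
by rewrite addrC subrK.
Qed.

Theorem lemma1 (R : realFieldType) (n d : nat) (ni : 'I_n -> nat)
  (H : forall i : 'I_n, 'M[R]_(ni i, d)) (theta : 'cV[R]_d)
  (w : forall i : 'I_n, nat -> 'cV[R]_(ni i)) (b : nat) (A : {set 'I_n})
  (adv : nat -> 'I_n -> 'I_n -> 'cV[R]_d) (x0 : 'I_n -> 'cV[R]_d) :
  (2 * b < n)%N -> (#|A| <= b)%N ->
  forall (t : nat) (i : 'I_n) (k : 'I_d), (1 <= t)%N -> i \notin A ->
  exists beta : 'I_n -> R,
    xstate H theta w b A adv x0 t i k 0
      = \sum_(j | j \notin A) beta j * zstate H theta w b A adv x0 t j k 0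
    /\ (forall j, j \notin A ->
          0 <= beta j <= 1 / ((#|~: A|)%:R - b%:R))
    /\ \sum_(j | j \notin A) beta j = 1.
Proof.
move=> hn hA t i k ht hi.
case: t ht => [//|t'] _.
rewrite /= mxE.
match goal with |- exists beta, trimmed_mean _ (map ?F _) = _ /\ _ =>
  have [beta [e1 [e2 e3]]] := key R n b A F hn hA end.
exists beta; split; last by split.
rewrite e1; apply: eq_bigr => j hj; congr (_ * _).
by rewrite /msg (negbTE hj) /=.
Qed.
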